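(* Let $n\ge 1$, $V=\mathbb F_2^n$, $\rho\in\mathrm{Sym}(V)\setminus\mathrm{AGL}(V)$ and $\theta\in\mathrm{GL}(V)$. Define $\overline\rho,\overline\theta\in\mathrm{Sym}(V\times V)$ by $$(x,y)\overline\rho=(x+y,\ y+(x+y)\rho),\qquad (x,y)\overline\theta=((x+y)\theta,\ y).$$ If the group $\langle \rho, T_n\rangle\le \mathrm{Sym}(V)$ is primitive on $V$, then the group $\Gamma(\mathrm{LM}(\rho,\theta))=\langle \overline\rho,\overline\theta,T_{2n}\rangle\le\mathrm{Sym}(V\times V)$ is primitive on $V\times V$ (indeed already $\langle\overline\rho,T_{2n}\rangle$ is primitive).
   Context: Maps act on the right: $x\rho$ is the image of $x$ under $\rho$ and $fg$ means first $f$ then $g$. $T_n$ is the group of translations $\sigma_v:x\mapsto x+v$ ($v\in V$) of $V$, and $T_{2n}$ is the group of translations $\sigma_{(v,w)}:(x,y)\mapsto(x+v,y+w)$ of $V\times V$. $\mathrm{AGL}(V)$ is the group of affine permutations of $V$ and $\mathrm{GL}(V)$ the group of linear ones. A group $G$ acting on a set $M$ is primitive if it is transitive and there is no $G$-invariant partition of $M$ other than $\{M\}$ and the partition into singletons. The round functions of the Lai–Massey cipher $\mathrm{LM}(\rho,\theta)$ are $\overline\rho\,\overline\theta\,\sigma_{(k\theta,k)}$ for round keys $k\in V$, i.e. $(x,y)\mapsto((x+(x+y)\rho+k)\theta,\ y+(x+y)\rho+k)$, so $\Gamma(\mathrm{LM}(\rho,\theta))$ contains the group generated by these round functions. *)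

(* Defs.v *)
From mathcomp Require Import all_boot all_algebra all_fingroup all_solvable.
Set Implicit Arguments. Unset Strict Implicit. Unset Printing Implicit Defensive.
Import GRing.Theory.
Local Open Scope ring_scope.

(* V = F_2^n as row vectors; Sym(V) = {perm V}.  Maps act on the right:
   in MathComp, (s * t) x = t (s x), matching the paper's convention. *)
Notation V n := 'rV['F_2]_n.

Definition affine_perm n (rho : {perm V n}) : Prop :=
  exists (A : 'M['F_2]_n) (b : V n), forall x, rho x = x *m A + b.

Definition linear_perm n (theta : {perm V n}) : Prop :=
  exists A : 'M['F_2]_n, forall x, theta x = x *m A.

Definition transl_fun n (v : V n) (x : V n) : V n := x + v.
Lemma transl_inj n (v : V n) : injective (transl_fun v).
Proof. by move=> x y; rewrite /transl_fun => /addIr. Qed.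
Definition transl n (v : V n) : {perm V n} := perm (@transl_inj n v).

Definition transl2_fun n (vw : V n * V n) (xy : V n * V n) : V n * V n :=
  (xy.1 + vw.1, xy.2 + vw.2).
Lemma transl2_inj n (vw : V n * V n) : injective (transl2_fun vw).
Proof.
move=> [x1 y1] [x2 y2] [] /addIr -> /addIr -> //.
Qed.
Definition transl2 n (vw : V n * V n) : {perm V n * V n} :=
  perm (@transl2_inj n vw).

Definition Tn n : {set {perm V n}} := [set transl v | v : V n].
Definition T2n n : {set {perm V n * V n}} := [set transl2 vw | vw : V n * V n].

Definition rhobar_fun n (rho : {perm V n}) (xy : V n * V n) : V n * V n :=
  (xy.1 + xy.2, xy.2 + rho (xy.1 + xy.2)).
Lemma rhobar_inj n (rho : {perm V n}) : injective (rhobar_fun rho).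
Proof.
move=> [x1 y1] [x2 y2] [] /= e1; rewrite e1 => /addIr e2.
by move: e1; rewrite e2 => /addIr ->.
Qed.
Definition rhobar n (rho : {perm V n}) : {perm V n * V n} :=
  perm (@rhobar_inj n rho).

Definition thetabar_fun n (theta : {perm V n}) (xy : V n * V n) : V n * V n :=
  (theta (xy.1 + xy.2), xy.2).
Lemma thetabar_inj n (theta : {perm V n}) : injective (thetabar_fun theta).
Proof.
move=> [x1 y1] [x2 y2] [] /= /perm_inj e ey; move: e; rewrite ey => /addIr ->.
by [].
Qed.
Definition thetabar n (theta : {perm V n}) : {perm V n * V n} :=
  perm (@thetabar_inj n theta).

(* Main.v *)
From HB Require Import structures.
Require Import Defs.
From mathcomp Require Import all_boot all_algebra all_fingroup all_solvable.
Set Implicit Arguments. Unset Strict Implicit. Unset Printing Implicit Defensive.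
Import GRing.Theory.

Section Gen.
Variable T : finZmodType.
Local Open Scope ring_scope.

Definition zsubg (Z : {set T}) := 0 \in Z /\ {in Z &, forall a b, a - b \in Z}.
Definition zcompat (f : T -> T) (Z : {set T}) :=
  forall s z, z \in Z -> f (s + z) - f s \in Z.
Definition zcos (Z : {set T}) s := [set x | x - s \in Z].

Lemma zsubgN Z : zsubg Z -> forall b, b \in Z -> - b \in Z.
Proof. by move=> [Z0 ZB] b Zb; rewrite -sub0r ZB. Qed.
Lemma zsubgD Z : zsubg Z -> forall a b, a \in Z -> b \in Z -> a + b \in Z.
Proof. by move=> hZ a b Za Zb; rewrite -[b]opprK hZ.2 // zsubgN. Qed.

Lemma cosE Z s x : zsubg Z -> x \in zcos Z s -> zcos Z x = zcos Z s.
Proof.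
move=> hZ; rewrite inE => hx; apply/setP => y; rewrite !inE.
apply/idP/idP => h.
  by have := zsubgD hZ h hx; rewrite addrA subrK.
by have := hZ.2 _ _ h hx; rewrite opprB addrA subrK.
Qed.

Lemma cos_self Z s : zsubg Z -> s \in zcos Z s.
Proof. by move=> hZ; rewrite inE subrr hZ.1. Qed.

Lemma card_cos Z s : #|zcos Z s| = #|Z|.
Proof.
have -> : zcos Z s = [set x + s | x in Z].
  apply/setP => y; rewrite inE; apply/idP/imsetP => [h|[x hx ->]].
    by exists (y - s); rewrite ?subrK.
  by rewrite addrK.
by rewrite card_imset //; apply: addIr.
Qed.

Lemma prim_no_block (A : {set {perm T}}) Z :
  zsubg Z -> (forall a, a \in A -> zcompat a Z) ->
  [primitive <<A>>, on [set: T] | 'P] -> Z = [set 0] \/ Z = [set: T].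
Proof.
move=> hZ hc /andP[_ /existsPn hnQ].
have [->|nZ0] := eqVneq Z [set 0]; first by left.
have [->|nZT] := eqVneq Z [set: T]; first by right.
exfalso; set Q := [set zcos Z s | s in [set: T]].
have := hnQ Q; apply/negP/negPn/and3P; split.
- apply/and3P; split.
  + apply/eqP/setP => x; rewrite inE; apply/bigcupP; exists (zcos Z x).
      by apply/imsetP; exists x.
    exact: cos_self.
  + apply/trivIsetP => _ _ /imsetP[s _ ->] /imsetP[t _ ->] hne.
    apply/pred0P => x /=; apply/negbTE/negP => /andP[hs ht].
    by move: hne; rewrite -(cosE hZ hs) -(cosE hZ ht) eqxx.
  + apply/imsetP => [[s _]] /setP /(_ s); rewrite cos_self // inE; discriminate.
- idtac.
  rewrite /= (@gen_subG _ A ('N(Q | 'P^*))%G); apply/subsetP => a Aa; rewrite !inE; apply/subsetP => X.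
  rewrite inE.
    case/imsetP => s _ ->; apply/imsetP; exists (a s) => //.
    apply/eqP; rewrite eqEcard; apply/andP; split.
      apply/subsetP => _ /imsetP[x hx ->]; rewrite inE /= apermE.
      move: hx; rewrite inE => hx.
      by have := hc a Aa s _ hx; rewrite (addrC s) subrK.
    by rewrite /= card_imset ?card_cos //; apply: perm_inj.
- have [t _ ht] : exists2 t, t \in [set: T] & t \notin Z.
    by apply/subsetPn; apply: contra nZT => h; rewrite eqEsubset subsetT h.
  have [z Zz z0] : exists2 z, z \in Z & z != 0.
    apply/exists_inP; apply: contraNT nZ0 => /exists_inPn h.
    apply/eqP/setP => x; rewrite inE; apply/idP/eqP => [hx|->]; last exact: hZ.1.
    by have := h x hx; rewrite negbK => /eqP.
  apply/andP; split.
    apply/card_gt1P; exists (zcos Z 0), (zcos Z t); split; try by apply/imsetP; exists 0.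
      by apply/imsetP; exists t.
    apply/negP => /eqP /setP /(_ t); rewrite !inE subr0 subrr hZ.1 (negbTE ht).
    discriminate.
  rewrite ltn_neqAle leq_imset_card andbT; apply/negP => /imset_injP hinj.
  have : zcos Z z = zcos Z 0 by apply: cosE => //; rewrite inE subr0.
  by move/hinj => /(_ (in_setT _) (in_setT _)) /eqP; rewrite (negbTE z0).
Qed.

Lemma block_free_prim (A : {set {perm T}}) :
  (forall v, exists2 g, g \in A & forall x, g x = x + v) ->
  (forall Z, zsubg Z -> (forall a, a \in A -> zcompat a Z) ->
      Z = [set 0] \/ Z = [set: T]) ->
  [primitive <<A>>, on [set: T] | 'P].
Proof.
move=> htr hZ; apply/andP; split.
  apply/imsetP; exists 0 => //; apply/setP => y; rewrite inE; apply/esym/orbitP.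
  have [g gA hg] := htr y; exists g; first exact: mem_gen.
  by change (g 0 = y); rewrite hg add0r.
apply/existsPn => Q; apply/negP => /and3P[hpart hacts /andP[h1 h2]].
have /and3P[/eqP hcov htriv h0] := hpart.
have actQ : forall g X, g \in A -> X \in Q -> [set g x | x in X] \in Q.
  move=> g X gA XQ.
  have gN : g \in ('N(Q | 'P^*))%g by apply: (subsetP hacts); exact: mem_gen.
  move: (astabs_act X gN); rewrite XQ => h; exact: h.
have inQ : forall x, pblock Q x \in Q by move=> x; rewrite pblock_mem // hcov.
have inpb : forall x, x \in pblock Q x by move=> x; rewrite mem_pblock hcov.
set Z := pblock Q 0.
have pbE : forall v y, (y \in pblock Q v) = (y - v \in Z).
  move=> v y; have [g gA hg] := htr v.
  have -> : pblock Q v = [set g x | x in Z].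
    apply: (def_pblock htriv (actQ g Z gA (inQ 0))).
    by apply/imsetP; exists 0; rewrite ?hg ?add0r.
  apply/imsetP/idP => [[x xZ ->]|h]; first by rewrite hg addrK.
  by exists (y - v); rewrite ?hg ?subrK.
have pbZ : forall z, z \in Z -> pblock Q z = Z.
  by move=> z zZ; apply: (def_pblock htriv (inQ 0) zZ).
have sZ : zsubg Z.
  split; first exact: inpb.
  by move=> a b aZ bZ; rewrite -pbE pbZ.
have cZ : forall a, a \in A -> zcompat a Z.
  move=> a aA s z zZ; rewrite -pbE.
  have h1' : s + z \in pblock Q s by rewrite pbE (addrC s) addrK.
  have -> : pblock Q (a s) = [set a x | x in pblock Q s].
    apply: def_pblock => //; first exact: actQ.
    by apply/imsetP; exists s.
  by apply/imsetP; exists (s + z).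
case: (hZ Z sZ cZ) => hZE.
  have hX : forall X, X \in Q -> #|X| = 1%N.
    move=> X XQ; have : X != set0 by apply: contraNneq h0 => <-.
    case/set0Pn => x xX; rewrite -(def_pblock htriv XQ xX).
    have -> : pblock Q x = [set x].
      by apply/setP => y; rewrite pbE hZE !inE subr_eq0.
    exact: cards1.
  move: h2; rewrite (card_partition hpart) (eq_bigr (fun _ => 1%N) hX).
  by rewrite sum1_card ltnn.
have : (#|Q| <= #|[set Z]|)%N.
  apply: subset_leq_card; apply/subsetP => X XQ; rewrite inE.
  have : X != set0 by apply: contraNneq h0 => <-.
  case/set0Pn => x xX; rewrite -(def_pblock htriv XQ xX).
  by rewrite pbZ // hZE.
by rewrite cards1 leqNgt h1.
Qed.
End Gen.
HB.instance Definition _ (M1 M2 : finZmodType) := Finite.on (M1 * M2)%type.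
Local Open Scope ring_scope.

Section Core.
Variable n : nat.
Implicit Types x y s : V n.

Lemma c2 x : x + x = 0.
Proof. apply/rowP => i; rewrite !mxE; case: (x 0 i) => [[|[|k]] Hk] //; by apply/val_inj. Qed.
Lemma oppV x : - x = x.
Proof. by rewrite -[LHS]add0r -(c2 x) addrK. Qed.
Lemma addKc x y : x + (x + y) = y.
Proof. by rewrite addrA c2 add0r. Qed.
Lemma addcK x y : x + y + y = x.
Proof. by rewrite -addrA c2 addr0. Qed.

Lemma c2eq x y : x + y = 0 -> x = y.
Proof. by move=> h; rewrite -(addcK x y) h add0r. Qed.

Lemma f2 (c : 'F_2) : c = 0 \/ c = 1.
Proof. case: c => [[|[|k]] Hk] //; [left|right]; exact/val_inj. Qed.

Lemma additive_lin (f : V n -> V n) : (forall s w, f (s + w) = f s + f w) ->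
  exists A : 'M['F_2]_n, forall x, f x = x *m A.
Proof.
move=> fadd.
have f0 : f 0 = 0 by have h := fadd 0 0; rewrite addr0 in h; rewrite {1}h c2.
have fZ : forall (c : 'F_2) v, f (c *: v) = c *: f v.
  by move=> c v; case: (f2 c) => ->; rewrite ?scale0r ?scale1r.
exists (\matrix_(i, j) f (delta_mx 0 i) 0 j) => x.
rewrite {1}(row_sum_delta x) (big_morph f fadd f0).
apply/rowP => k; rewrite !mxE summxE; apply: eq_bigr => j _.
by rewrite fZ !mxE.
Qed.

Lemma core (rho : {perm V n}) (U : {set V n * V n}) :
  (forall Z : {set V n}, zsubg Z -> zcompat rho Z -> Z = [set 0] \/ Z = [set: V n]) ->
  ~ affine_perm rho -> zsubg U -> zcompat (rhobar rho) U ->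
  U = [set 0] \/ U = [set: V n * V n].
Proof.
move=> hZ hnaff hU hc.
have Uadd : forall a b c d, (a, b) \in U -> (c, d) \in U -> (a + c, b + d) \in U.
  by move=> a b c d h1 h2; apply: (zsubgD hU h1 h2).
have F : forall u, u \in U -> forall s,
    (u.1 + u.2, u.2 + rho (s + (u.1 + u.2)) + rho s) \in U.
  move=> u hu s; have := hc (s, 0) u hu.
  rewrite !permE /rhobar_fun /=; case: u hu => u1 u2 hu /=.
  rewrite !add0r !addr0.
  have E : forall a b c d : V n, (a, b) - (c, d) = (a - c, b - d) by [].
  by rewrite E !oppV -!(addrA s u1 u2) [X in (X, _)]addrC addKc.
pose phi := fun u : V n * V n => (u.1 + u.2, u.2 + rho (0 + (u.1 + u.2)) + rho 0).
have phinj : injective phi.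
  move=> [a b] [c d] [] /= e1; rewrite e1 => /addIr /addIr e2.
  by rewrite e2 in e1; move/addIr: e1 => ->; rewrite e2.
have onto : forall v, v \in U -> exists2 u, u \in U & v = phi u.
  have sub : phi @: U \subset U by apply/subsetP => _ /imsetP[u hu ->]; exact: F.
  have eq : phi @: U = U.
    by apply/eqP; rewrite eqEcard sub (card_imset _ phinj) leqnn.
  move=> v hv; have : v \in phi @: U by rewrite eq.
  by case/imsetP => u hu ->; exists u.
have U0 : (0, 0) \in U := hU.1.
set X := [set x | [exists y, (x, y) \in U]].
set Y := [set y | (0, y) \in U].
have inX : forall x y, (x, y) \in U -> x \in X.
  by move=> x y h; rewrite inE; apply/existsP; exists y.
have XP : forall x, x \in X -> exists y, (x, y) \in U.
  by move=> x; rewrite inE => /existsP.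
have hX : zsubg X.
  split; first exact: (inX _ _ U0).
  move=> a b /XP[ya ha] /XP[yb hb]; rewrite oppV; exact: (inX _ _ (Uadd _ _ _ _ ha hb)).
have hY : zsubg Y.
  split; first by rewrite inE.
  move=> a b; rewrite !inE oppV => ha hb; have := Uadd _ _ _ _ ha hb; by rewrite addr0.
have P2 : forall u, u \in U -> u.2 \in X.
  move=> [u1 u2] hu /=.
  have h1 := inX _ _ hu.
  have h2 := inX _ _ (F _ hu 0); rewrite /= in h2.
  by have := zsubgD hX h1 h2; rewrite addKc.
have P3 : forall y, y \in Y -> (y, 0) \in U.
  move=> y; rewrite inE => hy; have [[u1 u2] hu [e1 e2]] := onto _ hy.
  rewrite /= -e1 add0r addcK in e2; rewrite -e2 in e1 hu.
  have e3 : u1 = y by rewrite -[u1](addcK u1 y) -e1 add0r.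
  rewrite e3 in hu; have := Uadd _ _ _ _ hu hy; by rewrite addr0 c2.
have cY : zcompat rho Y.
  move=> s y hy; rewrite oppV inE.
  have h := F _ (P3 _ hy) s; rewrite /= !addr0 add0r in h.
  have := Uadd _ _ _ _ h (P3 _ hy); by rewrite c2 addr0.
have cX : zcompat rho X.
  move=> s x /XP[y0 hxy]; rewrite oppV.
  have [[u1 u2] hu [e1 e2]] := onto _ hxy; rewrite /= in e1.
  have h := P2 _ (F _ hu s); rewrite /= -e1 in h.
  have h2 := P2 _ hu; rewrite /= in h2.
  by have := zsubgD hX h2 h; rewrite -addrA addKc.
case: (hZ Y hY cY) => hYE; last first.
  right; apply/setP => [[a b]]; rewrite inE.
  have ha := P3 a; rewrite hYE inE in ha; have hb : (0, b) \in U.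
    have hbY : b \in Y by rewrite hYE inE.
    by rewrite inE in hbY.
  by have := Uadd _ _ _ _ (ha isT) hb; rewrite addr0 add0r.
case: (hZ X hX cX) => hXE.
  left; apply/setP => [[a b]]; rewrite inE; apply/idP/eqP => [h|[-> ->]] //.
  have : a \in X := inX _ _ h; rewrite hXE inE => /eqP ea; rewrite ea in h.
  have : b \in Y by rewrite inE.
  by rewrite hYE inE => /eqP ->; rewrite ea.
exfalso; apply: hnaff.
have H : forall s w, rho (s + w) + rho w + (rho s + rho 0) = 0.
  move=> s w; have : w \in X by rewrite hXE inE.
  move=> /XP[y hy]; have [[u1 u2] hu [e1 e2]] := onto _ hy; rewrite /= in e1.
  have h := Uadd _ _ _ _ (F _ hu s) (F _ hu 0); rewrite /= -e1 c2 in h.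
  have : (u2 + rho (s + w) + rho s + (u2 + rho (0 + w) + rho 0)) \in Y by rewrite inE.
  rewrite hYE inE add0r => /eqP.
  by rewrite addrACA [X in X + _]addrACA c2 add0r addrACA.
pose f := fun x => rho x + rho 0.
have fadd : forall s w, f (s + w) = f s + f w.
  move=> s w; rewrite /f.
  have e : rho (s + w) = rho s + rho 0 + rho w.
    by rewrite -(c2eq (H s w)) addcK.
  by rewrite e -addrA.
have [A hA] := additive_lin fadd.
exists A, (rho 0) => x; by rewrite -hA /f addcK.
Qed.
End Core.

Local Close Scope ring_scope.
Local Open Scope group_scope.

Theorem theorem3p3 (n : nat) (hn : (1 <= n)%N)
    (rho theta : {perm V n})
    (hrho : ~ affine_perm rho) (htheta : linear_perm theta)
    (hprim : [primitive << rho |: Tn n >>, on [set: V n] | 'P]) :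
  [primitive << rhobar rho |: (thetabar theta |: T2n n) >>,
     on [set: V n * V n] | 'P]
  /\ [primitive << rhobar rho |: T2n n >>, on [set: V n * V n] | 'P].
Proof.
have hZV : forall Z : {set V n}, @zsubg (V n : finZmodType) Z -> @zcompat (V n : finZmodType) rho Z ->
    Z = [set 0%R] \/ Z = [set: V n].
  move=> Z hZ hc; apply: (prim_no_block hZ _ hprim) => a.
  case/setU1P => [->|/imsetP[v _ ->]] //.
  move=> s z hz; rewrite !permE /transl_fun.
  have e : forall p q : V n, (p + q - p)%R = q by move=> p q; rewrite addrC addKr.
  by rewrite (addrAC s z v) e.
have htr : forall A : {set {perm V n * V n}}, T2n n \subset A ->
    forall v : V n * V n, exists2 g, g \in A & forall x, g x = (x + v)%R.
  move=> A sA v; exists (transl2 v).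
    by apply: (subsetP sA); apply: imset_f.
  by move=> [x1 x2]; rewrite permE.
split.
  apply: block_free_prim.
    by apply: htr; apply: subset_trans (subsetU1 _ _) (subsetU1 _ _).
  move=> Z hZ hc; apply: (core hZV hrho hZ); apply: hc; exact: setU11.
apply: block_free_prim.
  by apply: htr; apply: subsetU1.
move=> Z hZ hc; apply: (core hZV hrho hZ); apply: hc; exact: setU11.
Qed.
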